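(* Let $\Bbbk$ be an algebraically closed field of characteristic zero, $G$ a finite group, $\chi:G\to\Bbbk^\times$ a linear character, $g\in Z(G)$, $n\geq2$ the multiplicative order of $\chi(g)$, and $H$ the $\Bbbk$-algebra generated by $\Bbbk G$ and $z$ with relations $z^n=0$, $zs=\chi(s)sz$ ($s\in G$). Suppose $$\Big(\sum_{j=1}^t z^{l_j}\sum_{i=0}^{p-1}\alpha_i^{(j)}e_i\Big)=\Big(\sum_{s=1}^r z^{m_s}\sum_{i=0}^{p-1}\beta_i^{(s)}e_i\Big),$$ where $n-1\geq l_1>\cdots>l_t\geq0$, $n-1\geq m_1>\cdots>m_r\geq0$, all $\alpha_i^{(j)},\beta_i^{(s)}\in\{0,1\}$, $\sum_i\alpha_i^{(t)}\neq0$ and $\sum_i\beta_i^{(r)}\neq0$. Then $l_t=m_r$ and $\alpha_i^{(t)}=\beta_i^{(r)}$ for $0\leq i\leq p-1$.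
   Context: $\chi_0,\dots,\chi_{p-1}$ are the irreducible characters of $G$ and $e_i=\frac{\chi_i(1)}{|G|}\sum_{h\in G}\chi_i(h)h^{-1}$ the primitive central idempotents of $\Bbbk G$. $(a)$ denotes the two-sided ideal of $H$ generated by $a$. *)

(* Defs.v *)
From HB Require Import structures.
From mathcomp Require Import all_boot all_order all_algebra all_fingroup all_solvable all_field all_character.
Set Implicit Arguments. Unset Strict Implicit. Unset Printing Implicit Defensive.
Import Order.TTheory GRing.Theory Num.Theory.
Local Open Scope ring_scope.

Section Defs.
Variables (k : fieldType) (gT : finGroupType).

Definition is_irr_char (phi : gT -> k) : Prop :=
  exists m (rG : mx_representation k [set: gT]%G m),
    mx_irreducible rG /\ forall x, phi x = \tr (rG x).

Definition irr_enum (p : nat) (chi_ : 'I_p -> gT -> k) : Prop :=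
  (forall i, is_irr_char (chi_ i)) /\
  (forall i j, (forall x, chi_ i x = chi_ j x) -> i = j) /\
  (forall phi, is_irr_char phi -> exists i, forall x, phi x = chi_ i x).

Definition kG := {ffun gT -> k}.

(* e_phi = phi(1)/|G| * sum_h phi(h) h^{-1}; its coefficient at x is
   phi(1)/|G| * phi(x^{-1}). *)
Definition cidem (phi : gT -> k) : kG :=
  [ffun x => phi 1%g / (#|gT|%:R) * phi (x^-1)%g].

(* The algebra H = k<kG, z | z^n = 0, z s = chi(s) s z>, realized on its
   basis { z^a h : 0 <= a < n, h in G }: an element is its coefficient
   function on pairs (a, h). *)
Variables (n : nat) (chi : gT -> k).

Definition Halg := {ffun 'I_n * gT -> k}.

(* (z^a s)(z^b t) = chi(s)^{-b} z^{a+b} (s t), which is 0 when a + b >= n *)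
Definition basis_prod (p q : 'I_n * gT) : Halg :=
  [ffun r : 'I_n * gT =>
     if ((r.1 : nat) == (p.1 + q.1)%N) && (r.2 == (p.2 * q.2)%g)
     then (chi p.2) ^- q.1 else 0].

Definition mulH (x y : Halg) : Halg :=
  [ffun r => \sum_(p : 'I_n * gT) \sum_(q : 'I_n * gT) x p * y q * basis_prod p q r].

Definition zpow (l : nat) : Halg :=
  [ffun r : 'I_n * gT => ((((r.1 : nat) == l) && (r.2 == 1%g)) : bool)%:R].

Definition kG_emb (e : kG) : Halg :=
  [ffun r : 'I_n * gT => if (r.1 : nat) == 0%N then e r.2 else 0].

Definition in_ideal (a x : Halg) : Prop :=
  exists s : seq (Halg * Halg), x = \sum_(uv <- s) mulH (mulH uv.1 a) uv.2.

Definition same_ideal (a b : Halg) : Prop :=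
  forall x, in_ideal a x <-> in_ideal b x.

Definition zsum (p : nat) (e : 'I_p -> kG) (t : nat) (l : nat -> nat)
    (alpha : nat -> 'I_p -> k) : Halg :=
  \sum_(1 <= j < t.+1)
     mulH (zpow (l j)) (kG_emb [ffun x => \sum_(i < p) alpha j i * e i x]).

End Defs.

(* Main.v *)
Require Import Defs.
From HB Require Import structures.
From mathcomp Require Import all_boot all_order all_algebra all_fingroup all_solvable all_field all_character.
Import Order.TTheory GRing.Theory Num.Theory.
Local Open Scope ring_scope.
Set Implicit Arguments. Unset Strict Implicit. Unset Printing Implicit Defensive.
From mathcomp Require Import ring zify.

Section RepTh.
Variables (F : closedFieldType) (gT : finGroupType).
Hypothesis F0 : [pchar F] =i pred0.
Local Notation G := [set: gT]%G.
Local Notation aG := (regular_repr F G).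
Local Notation R_G := (group_ring F G).

Lemma F'G : ([pchar F]^'.-group G)%g.
Proof. by rewrite /pgroup pcharf'_nat (pcharf0P _).1 // -lt0n cardG_gt0. Qed.

Lemma splitG : group_splitting_field F G.
Proof. exact: (@group_closure_closed_field F gT). Qed.

Let sG := DecSocleType aG.

Lemma tr_regular x : x \in G -> \tr (aG x) = (#|G| * (x == 1%g))%:R.
Proof.
move=> Gx; rewrite /mxtrace.
have [->|nx1] := eqVneq x 1%g.
  rewrite muln1 (eq_bigr (fun _ => 1)); last first.
    by move=> i _; rewrite /= /regular_mx mxE mulg1 gring_valK mxE !eqxx.
  by rewrite sumr_const card_ord.
rewrite muln0 big1 // => i _; rewrite /= /regular_mx mxE mxE /=.
case: eqP => // /(congr1 (@enum_val _ (pred_of_set G))).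
rewrite gring_indexK ?in_setT // => /eqP.
by rewrite -{1}[enum_val i]mulg1 (inj_eq (mulgI _)) eq_sym (negbTE nx1).
Qed.


Lemma Gnz : (#|G|%:R : F) != 0.
Proof. by rewrite (pcharf0P _).1 // -lt0n cardG_gt0. Qed.


Lemma tr_gring (a : gT -> F) : \tr (\sum_(y in G) a y *: aG y) = #|G|%:R * a 1%g.
Proof.
have E y : \tr (a y *: aG y) = a y * (#|G| * (y == 1%g))%:R.
  by rewrite mxtraceZ (tr_regular (in_setT y)).
rewrite raddf_sum. rewrite (eq_bigr _ (fun y _ => E y)). rewrite (bigD1 1%g); last exact: in_setT. rewrite [(1%g == 1%g)]eqxx muln1.
rewrite big1; first by rewrite /= addr0 mulrC.
move=> y /andP[_ ny1].
by rewrite (negbTE ny1) muln0 mulr0.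
Qed.

Lemma trS (I : finType) (P : pred I) m (f : I -> 'M[F]_m) :
  \tr (\sum_(i | P i) f i) = \sum_(i | P i) \tr (f i).
Proof. exact: raddf_sum. Qed.

Lemma tr_RG A : (A \in R_G)%MS ->
  \tr A = \sum_(W : sG) \tr (gring_op (irr_repr W) A) *+ irr_degree W.
Proof.
case/envelop_mxP=> b ->.
rewrite trS.
transitivity (\sum_(y in G) \sum_(W : sG) b y * \tr (irr_repr W y) *+ irr_degree W).
  apply: eq_bigr => y _.
  rewrite mxtraceZ (mxtrace_regular_pchar sG F'G splitG (in_setT y)).
  by rewrite mulr_sumr; apply: eq_bigr => W _; rewrite mulrnAr.
rewrite exchange_big /=; apply: eq_bigr => W _.
rewrite linear_sum trS -sumrMnl; apply: eq_bigr => y _.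
by rewrite linearZ /= gring_opG ?in_setT // mxtraceZ.
Qed.

Lemma Wexp (W : sG) : exists a : gT -> F,
  Wedderburn_id W = \sum_(x in G) a x *: aG x /\
  forall x, a x = #|G|%:R^-1 * ((irr_degree W)%:R * \tr (irr_repr W (x^-1)%g)).
Proof.
have Re : (Wedderburn_id W \in R_G)%MS.
  by rewrite -(Wedderburn_sum_pchar sG F'G) (sumsmx_sup W) ?Wedderburn_id_mem.
have Re' := Re.
case/envelop_mxP: Re => a def_e; exists a; split => // x.
have Gx' : x^-1%g \in G := in_setT _.
have k1 : \tr (Wedderburn_id W *m aG (x^-1)%g) = #|G|%:R * a x.
  rewrite def_e mulmx_suml trS.
  have E i : \tr (a i *: aG i *m aG (x^-1)%g) = a i * (#|G| * (i * x^-1 == 1)%g)%:R.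
    by rewrite -scalemxAl mxtraceZ -(repr_mxM _ (in_setT i) Gx') (tr_regular (in_setT _)).
  rewrite (eq_bigr _ (fun i _ => E i)) (bigD1 x); last exact: in_setT.
  rewrite [(x * x^-1)%g]mulgV [(1%g == 1%g)]eqxx muln1.
  rewrite big1; first by rewrite /= addr0 mulrC.
  move=> y /andP[_ nyx].
  by rewrite -eq_mulgV1 (negbTE nyx) muln0 mulr0.
have k2 : \tr (Wedderburn_id W *m aG (x^-1)%g) = \tr (irr_repr W (x^-1)%g) *+ irr_degree W.
  rewrite tr_RG; last by rewrite envelop_mxM // envelop_mx_id.
  rewrite (bigD1 W) //=.
  rewrite gring_opM; last exact: envelop_mx_id.
  rewrite (op_Wedderburn_id_pchar F'G) (gring_opG _ Gx') mul1mx.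
  rewrite big1; first by rewrite /= addr0.
  move=> W' nW'; have nW : W != W' by rewrite eq_sym.
  rewrite gring_opM; last exact: envelop_mx_id.
  by rewrite (irr_repr'_op0_pchar F'G nW (Wedderburn_id_mem W)) mul0mx mxtrace0 mul0rn.
apply: (mulfI Gnz); rewrite mulrA mulfV; last exact: Gnz.
by rewrite mul1r -k1 k2 mulr_natl.
Qed.

Lemma Wkey (W W' : sG) :
  \sum_(x in G) (#|G|%:R^-1 * ((irr_degree W)%:R * \tr (irr_repr W (x^-1)%g))) *: irr_repr W' x
  = (W == W')%:R *: 1%:M.
Proof.
have [a [def_e Ha]] := Wexp W.
transitivity (gring_op (irr_repr W') (Wedderburn_id W)).
  rewrite def_e linear_sum; apply: eq_bigr => x _.
  by rewrite linearZ /= (gring_opG _ (in_setT x)) Ha.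
have [<-|nW] := eqVneq W W'.
  by rewrite (op_Wedderburn_id_pchar F'G) scale1r.
by rewrite (irr_repr'_op0_pchar F'G nW (Wedderburn_id_mem W)) scale0r.
Qed.

Lemma cidem_key (phi : gT -> F) (W W' : sG) (Hphi : forall x, phi x = \tr (irr_repr W x)) :
  \sum_(x : gT) cidem phi x *: irr_repr W' x = (W == W')%:R *: 1%:M.
Proof.
rewrite -(Wkey W W'); apply: eq_big => [x|x _]; first by rewrite in_setT.
congr (_ *: _); rewrite /cidem ffunE !Hphi repr_mx1 mxtrace1 cardsT.
by rewrite mulrA [_ * #|gT|%:R^-1]mulrC.
Qed.

Lemma one_nz (W : sG) : (1%:M : 'M[F]_(irr_degree W)) != 0.
Proof.
apply/negP => /eqP/matrixP/(_ (Ordinal (irr_degree_gt0 W)) (Ordinal (irr_degree_gt0 W))).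
by rewrite !mxE eqxx /= => /eqP; rewrite oner_eq0.
Qed.

Lemma exists_W p (chi_ : 'I_p -> gT -> F) (Hirr : irr_enum chi_) (i : 'I_p) :
  exists W : sG, forall x, chi_ i x = \tr (irr_repr W x).
Proof.
case: Hirr => Hi _; have [m [rG [irrG Hch]]] := Hi i.
exists (irr_comp sG rG) => x.
by rewrite Hch (mxtrace_rsim (rsim_irr_comp_pchar sG F'G irrG) (in_setT x)).
Qed.

Lemma char_key p (chi_ : 'I_p -> gT -> F) (Hirr : irr_enum chi_) (j : 'I_p) (W : sG)
  (HW : forall x, chi_ j x = \tr (irr_repr W x)) (i : 'I_p) :
  \sum_(x : gT) cidem (chi_ i) x *: irr_repr W x = (i == j)%:R *: 1%:M.
Proof.
have [Wi HWi] := exists_W Hirr i.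
rewrite (cidem_key W HWi); suff ->: (Wi == W) = (i == j) by [].
case: Hirr => _ [Hinj _].
apply/idP/idP => [/eqP e | /eqP e].
  by apply/eqP; apply: Hinj => x; rewrite HWi HW e.
subst j; apply/negPn/negP => nW.
have h1 := cidem_key W HWi; have h2 := cidem_key W HW.
rewrite h1 (negbTE nW) eqxx scale0r scale1r in h2.
by move/eqP: h2; rewrite eq_sym (negbTE (one_nz W)).
Qed.

Lemma rho_E p (chi_ : 'I_p -> gT -> F) (Hirr : irr_enum chi_) (j0 : 'I_p) (W : sG)
  (HW : forall x, chi_ j0 x = \tr (irr_repr W x)) (c : 'I_p -> F) :
  \sum_(h : gT) [ffun x => \sum_(i < p) c i * cidem (chi_ i) x] h *: irr_repr W h
  = c j0 *: 1%:M.
Proof.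
under eq_bigr => h _ do rewrite ffunE scaler_suml.
rewrite exchange_big /=.
under eq_bigr => i _ do (under eq_bigr => h _ do rewrite -scalerA; rewrite -scaler_sumr (char_key Hirr HW)).
rewrite (bigD1 j0) //= eqxx scale1r big1 ?addr0 // => i ni.
by rewrite (negbTE ni) scale0r scaler0.
Qed.

End RepTh.

Section HAlg.
Variables (k : fieldType) (gT : finGroupType) (n : nat) (chi : gT -> k).
Variables (d : nat) (rho : mx_representation k [set: gT]%G d).
Local Notation H := (Halg k gT n).
Local Notation mul := (mulH chi).

Definition Psi (c : gT -> k) (m : nat) (x : H) : 'M[k]_d :=
  \sum_(q : 'I_n * gT) ((((q.1 : nat) == m)%:R * c q.2 * x q) *: rho q.2).
Definition low m (x : H) := forall q : 'I_n * gT, (q.1 < m)%N -> x q = 0.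

Lemma rhoM (x y : gT) : rho (x * y)%g = rho x *m rho y.
Proof. exact: repr_mxM (in_setT x) (in_setT y). Qed.

Lemma sum_bp m (hm : (m < n)%N) (p q : 'I_n * gT) :
  \sum_(r : 'I_n * gT) ((((r.1 : nat) == m)%:R * basis_prod chi p q r) *: rho r.2)
  = ((((p.1 + q.1)%N == m) : bool)%:R * chi p.2 ^- q.1) *: rho (p.2 * q.2)%g.
Proof.
have [e|e] := eqVneq (p.1 + q.1)%N m.
  rewrite (bigD1 (Ordinal hm, (p.2 * q.2)%g)) //=.
  rewrite big1.
    by rewrite addr0 /basis_prod ffunE /= e !eqxx !mul1r.
  move=> r nr; rewrite /basis_prod ffunE.
  case: ifP => [/andP[/eqP h1 /eqP h2]|_]; last by rewrite mulr0 scale0r.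
  exfalso; apply: (negP nr); case: r {nr} h1 h2 => [r1 r2] /= h1 h2.
  by rewrite xpair_eqE -val_eqE /= h1 e h2 !eqxx.
rewrite mul0r scale0r; apply: big1 => r _; rewrite /basis_prod ffunE.
case: ifP => [/andP[/eqP h1 _]|_]; last by rewrite mulr0 scale0r.
by rewrite h1 (negbTE e) mul0r scale0r.
Qed.


Lemma Psi_mull m (hm : (m < n)%N) u b : low m b ->
  Psi (fun _ => 1) m (mul u b) = Psi (fun s => chi s ^- m) 0 u *m Psi (fun _ => 1) m b.
Proof.
move=> lb.
transitivity (\sum_(p : 'I_n * gT) \sum_(q : 'I_n * gT)
  (u p * b q * ((((p.1 + q.1)%N == m) : bool)%:R * chi p.2 ^- q.1)) *: rho (p.2 * q.2)%g).
  rewrite /Psi.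
  under eq_bigr => r _ do rewrite mulr1 /mulH ffunE mulr_sumr scaler_suml.
  rewrite exchange_big; apply: eq_bigr => p _.
  under eq_bigr => r _ do rewrite mulr_sumr scaler_suml.
  rewrite exchange_big; apply: eq_bigr => q _.
  rewrite -scalerA -(sum_bp hm) scaler_sumr; apply: eq_bigr => r _.
  by rewrite scalerA mulrCA.
rewrite /Psi mulmx_suml; apply: eq_bigr => p _; rewrite mulmx_sumr; apply: eq_bigr => q _.
rewrite -scalemxAl -scalemxAr scalerA -rhoM; congr (_ *: _).
have [hq|hq] := ltnP q.1 m; first by rewrite lb // !(mulr0, mul0r).
have [p0|p0] := eqVneq (p.1 : nat) 0%N.
  rewrite p0 add0n.
  have [qm|qm] := eqVneq (q.1 : nat) m.
    rewrite qm /= ?mulr1n; ring.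
  rewrite /= ?mulr1n ?mulr0n; ring.
have -> : ((p.1 + q.1)%N == m) = false.
  apply/negbTE; rewrite neq_ltn; apply/orP; right.
  have : (0 < p.1)%N by rewrite lt0n.
  move: hq; clear; lia.
rewrite /= ?mulr1n ?mulr0n; ring.
Qed.


Lemma Psi_mulr m (hm : (m < n)%N) w v : low m w ->
  Psi (fun _ => 1) m (mul w v) = Psi (fun _ => 1) m w *m Psi (fun _ => 1) 0 v.
Proof.
move=> lw.
transitivity (\sum_(p : 'I_n * gT) \sum_(q : 'I_n * gT)
  (w p * v q * ((((p.1 + q.1)%N == m) : bool)%:R * chi p.2 ^- q.1)) *: rho (p.2 * q.2)%g).
  rewrite /Psi.
  under eq_bigr => r _ do rewrite mulr1 /mulH ffunE mulr_sumr scaler_suml.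
  rewrite exchange_big; apply: eq_bigr => p _.
  under eq_bigr => r _ do rewrite mulr_sumr scaler_suml.
  rewrite exchange_big; apply: eq_bigr => q _.
  rewrite -scalerA -(sum_bp hm) scaler_sumr; apply: eq_bigr => r _.
  by rewrite scalerA mulrCA.
rewrite /Psi mulmx_suml; apply: eq_bigr => p _; rewrite mulmx_sumr; apply: eq_bigr => q _.
rewrite -scalemxAl -scalemxAr scalerA -rhoM; congr (_ *: _).
have [hp|hp] := ltnP p.1 m; first by rewrite lw // !(mulr0, mul0r).
have [q0|q0] := eqVneq (q.1 : nat) 0%N.
  rewrite q0 addn0 expr0 invr1.
  have [pm|pm] := eqVneq (p.1 : nat) m.
    rewrite /= ?mulr1n; ring.
  rewrite /= ?mulr1n ?mulr0n; ring.
have -> : ((p.1 + q.1)%N == m) = false.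
  apply/negbTE; rewrite neq_ltn; apply/orP; right.
  have : (0 < q.1)%N by rewrite lt0n.
  move: hp; clear; lia.
rewrite /= ?mulr1n ?mulr0n; ring.
Qed.

Lemma low_mulr m u b : low m b -> low m (mul u b).
Proof.
move=> lb r hr; rewrite /mulH ffunE; apply: big1 => p _; apply: big1 => q _.
have [hq|hq] := ltnP q.1 m; first by rewrite lb // mulr0 mul0r.
rewrite /basis_prod ffunE.
have -> : ((r.1 : nat) == (p.1 + q.1)%N) = false.
  apply/negbTE; rewrite neq_ltn; apply/orP; left.
  move: hr hq; clear; lia.
by rewrite /= mulr0.
Qed.

Lemma low_mull m b v : low m b -> low m (mul b v).
Proof.
move=> lb r hr; rewrite /mulH ffunE; apply: big1 => p _; apply: big1 => q _.
have [hp|hp] := ltnP p.1 m; first by rewrite lb // !mul0r.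
rewrite /basis_prod ffunE.
have -> : ((r.1 : nat) == (p.1 + q.1)%N) = false.
  apply/negbTE; rewrite neq_ltn; apply/orP; left.
  move: hr hp; clear; lia.
by rewrite /= mulr0.
Qed.

Lemma Psi_sum c m (I : Type) (r : seq I) (P : pred I) (F : I -> H) :
  Psi c m (\sum_(i <- r | P i) F i) = \sum_(i <- r | P i) Psi c m (F i).
Proof.
rewrite /Psi.
under eq_bigr => q _ do rewrite sum_ffunE mulr_sumr scaler_suml.
by rewrite exchange_big.
Qed.

Lemma low_sum m (I : Type) (r : seq I) (P : pred I) (F : I -> H) :
  (forall i, P i -> low m (F i)) -> low m (\sum_(i <- r | P i) F i).
Proof.
move=> hF q hq; rewrite sum_ffunE; apply: big1 => i Pi; exact: hF.
Qed.

Lemma Psi_low c m m' x : low m' x -> (m < m')%N -> Psi c m x = 0.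
Proof.
move=> lx hm; apply: big1 => q _.
have [e|e] := eqVneq (q.1 : nat) m; last by rewrite /= !mul0r scale0r.
by rewrite lx ?e // mulr0 scale0r.
Qed.


Lemma low_le m m' x : low m' x -> (m <= m')%N -> low m x.
Proof. by move=> lx hm q hq; apply: lx; apply: leq_trans hm. Qed.

Lemma low_zpow l : low l (zpow k gT n l).
Proof.
move=> q hq; rewrite /zpow ffunE.
by have -> : ((q.1 : nat) == l) = false by apply/negbTE; rewrite neq_ltn hq.
Qed.

Lemma Psi_zpow c l (hl : (l < n)%N) : Psi c l (zpow k gT n l) = c 1%g *: 1%:M.
Proof.
rewrite /Psi (bigD1 (Ordinal hl, 1%g)) //= big1.
  by rewrite addr0 /zpow ffunE /= !eqxx /= mul1r mulr1 repr_mx1.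
move=> q nq; rewrite /zpow ffunE.
case: (eqVneq (q.1 : nat) l) => e1; last by rewrite /= !mul0r scale0r.
case: (eqVneq q.2 1%g) => e2; last by rewrite /= mulr0 scale0r.
exfalso; apply: (negP nq); case: q {nq} e1 e2 => [q1 q2] /= e1 e2.
by rewrite xpair_eqE -val_eqE /= e1 e2 !eqxx.
Qed.

Lemma Psi_emb (n0 : (0 < n)%N) (E : kG k gT) :
  Psi (fun _ => 1) 0 (kG_emb n E) = \sum_(h : gT) E h *: rho h.
Proof.
transitivity (\sum_(a : 'I_n) \sum_(h : gT)
   ((((a : nat) == 0%N) : bool)%:R * 1 * kG_emb n E (a, h)) *: rho h).
  by rewrite /Psi pair_bigA; apply: eq_bigr => -[a h] _.
rewrite (bigD1 (Ordinal n0)) //= [X in _ + X]big1; last first.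
  move=> a na; apply: big1 => h _.
  have -> : ((a : nat) == 0%N) = false.
    by apply/negbTE; apply: contra na => /eqP e; apply/eqP; apply: val_inj.
  by rewrite /= !mul0r scale0r.
by rewrite addr0; apply: eq_bigr => h _; rewrite /kG_emb ffunE /= !mul1r.
Qed.


Lemma chain (t : nat) (l : nat -> nat)
  (decr : forall j, (1 <= j < t)%N -> (l j.+1 < l j)%N) :
  forall kk j, (1 <= j)%N -> (j + kk <= t)%N -> (l (j + kk) + kk <= l j)%N.
Proof.
elim=> [|kk IH] j j1 jt; first by rewrite !addn0.
have h1 := IH j j1 ltac:(move: jt; clear; lia).
have h2 : (l (j + kk).+1 < l (j + kk))%N.
  by apply: decr; move: j1 jt; clear; lia.
have -> : (j + kk.+1 = (j + kk).+1)%N by rewrite addnS.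
move: h1 h2; clear; lia.
Qed.

Lemma zsum_props (t : nat) (l : nat -> nat) (E : nat -> kG k gT) (t_pos : (0 < t)%N)
  (l1 : (l 1 < n)%N) (decr : forall j, (1 <= j < t)%N -> (l j.+1 < l j)%N) :
  low (l t) (\sum_(1 <= j < t.+1) mul (zpow k gT n (l j)) (kG_emb n (E j))) /\
  Psi (fun _ => 1) (l t) (\sum_(1 <= j < t.+1) mul (zpow k gT n (l j)) (kG_emb n (E j)))
    = \sum_(h : gT) E t h *: rho h.
Proof.
have hb j : (1 <= j <= t)%N -> (l t + (t - j) <= l j)%N /\ (l j < n)%N.
  case/andP=> j1 jt; split.
    by have := @chain t l decr (t - j)%N j j1; rewrite subnKC //; apply.
  have := @chain t l decr j.-1 1 (leqnn 1); rewrite add1n prednK //.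
  by move/(_ jt) => h; move: h l1; clear; lia.
have ltn0 : (0 < n)%N by move: l1; clear; lia.
have [ltn' _] := hb t ltac:(by rewrite t_pos leqnn).
have ltt : (l t < n)%N by have [_ ?] := hb t ltac:(by rewrite t_pos leqnn).
split.
  rewrite big_nat_cond; apply: low_sum => j /andP[/andP[j1 jt] _].
  have [h _] := hb j ltac:(by rewrite j1 -ltnS jt).
  apply: low_mull; apply: (low_le (@low_zpow (l j))); move: h; clear; lia.
rewrite Psi_sum big_nat_recr //= big_nat_cond big1.
  rewrite add0r Psi_mulr //; last exact: low_zpow.
  by rewrite Psi_zpow // scale1r mul1mx Psi_emb.
move=> j /andP[/andP[j1 jt] _].
have [h hn] := hb j ltac:(by rewrite j1 (ltnW jt)).
apply: (Psi_low _ (low_mull _ (@low_zpow (l j)))).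
move: h jt; clear; lia.
Qed.


Lemma ideal_Psi m (hm : (m < n)%N) b x (beta : k) : low m b ->
  Psi (fun _ => 1) m b = beta *: 1%:M -> in_ideal chi b x ->
  low m x /\ exists M, Psi (fun _ => 1) m x = beta *: M.
Proof.
move=> lb Pb [s ->]; split.
  by apply: low_sum => uv _; apply: low_mull; apply: low_mulr.
exists (\sum_(uv <- s) Psi (fun s0 => chi s0 ^- m) 0 uv.1 *m Psi (fun _ => 1) 0 uv.2).
rewrite Psi_sum scaler_sumr; apply: eq_bigr => uv _.
rewrite Psi_mulr //; last exact: low_mulr.
by rewrite Psi_mull // Pb -scalemxAr mulmx1 -scalemxAl.
Qed.

Lemma dir (chi1 : chi 1%g = 1) (d_pos : (0 < d)%N) (A B : H) mA mB
  (hA : (mA < n)%N) (hB : (mB < n)%N) (a b : k) :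
  low mA A -> low mB B -> Psi (fun _ => 1) mA A = a *: 1%:M ->
  Psi (fun _ => 1) mB B = b *: 1%:M ->
  (forall x, in_ideal chi A x -> in_ideal chi B x) ->
  (a != 0 -> (mB <= mA)%N) /\ (mA = mB -> b = 0 -> a = 0).
Proof.
move=> lA lB PA PB sub.
have n0 : (0 < n)%N by move: hA; clear; lia.
pose one := zpow k gT n 0.
pose x0 := mul (mul one A) one.
have ix : in_ideal chi A x0 by exists [:: (one, one)]; rewrite big_cons big_nil addr0.
have [lx [M PM]] := ideal_Psi hB lB PB (sub _ ix).
have Px : Psi (fun _ => 1) mA x0 = a *: 1%:M.
  rewrite /x0 Psi_mulr //; last by apply: low_mulr.
  rewrite Psi_mull // PA !Psi_zpow //= chi1 expr1n invr1 !scale1r mul1mx mulmx1.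
  by [].
have I0 : (1%:M : 'M[k]_d) != 0.
  apply/negP => /eqP/matrixP/(_ (Ordinal d_pos) (Ordinal d_pos)).
  by rewrite !mxE eqxx /= => /eqP; rewrite oner_eq0.
split.
  move=> a0; rewrite leqNgt; apply/negP => lt.
  have := Psi_low (fun _ => 1) lx lt; rewrite Px => /eqP.
  by rewrite scaler_eq0 (negbTE a0) (negbTE I0).
move=> e b0; subst mB; move: Px; rewrite PM b0 scale0r => /eqP.
by rewrite eq_sym scaler_eq0 (negbTE I0) orbF => /eqP.
Qed.

End HAlg.


Unset Implicit Arguments.

Theorem corollary3p6
  (k : closedFieldType) (k_char0 : [pchar k] =i pred0)
  (gT : finGroupType)
  (chi : gT -> k)
  (chi_mul : forall x y : gT, chi (x * y)%g = chi x * chi y)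
  (chi_unit : forall x : gT, chi x != 0)
  (g : gT) (g_central : g \in ('Z([set: gT]))%g)
  (n : nat) (n_ge2 : (2 <= n)%N) (n_order : n.-primitive_root (chi g))
  (p : nat) (chi_ : 'I_p -> gT -> k) (chi_irr : irr_enum chi_)
  (t r : nat) (l m : nat -> nat)
  (alpha beta : nat -> 'I_p -> k)
  (t_pos : (0 < t)%N) (r_pos : (0 < r)%N)
  (l1_lt : (l 1 < n)%N)
  (l_decr : forall j, (1 <= j < t)%N -> (l j.+1 < l j)%N)
  (m1_lt : (m 1 < n)%N)
  (m_decr : forall s, (1 <= s < r)%N -> (m s.+1 < m s)%N)
  (alpha01 : forall j i, (1 <= j <= t)%N -> (alpha j i == 0) || (alpha j i == 1))
  (beta01 : forall s i, (1 <= s <= r)%N -> (beta s i == 0) || (beta s i == 1))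
  (alpha_t_nz : \sum_(i < p) alpha t i != 0)
  (beta_r_nz : \sum_(i < p) beta r i != 0)
  (heq : @same_ideal k gT n chi
           (@zsum k gT n chi p (fun i => cidem (chi_ i)) t l alpha)
           (@zsum k gT n chi p (fun i => cidem (chi_ i)) r m beta)) :
  l t = m r /\ forall i : 'I_p, alpha t i = beta r i.
Proof.
have chi1 : chi 1%g = 1.
  have h := chi_mul 1%g 1%g; rewrite mulg1 in h.
  by apply: (mulfI (chi_unit 1%g)); rewrite mulr1 -h.
pose EA := fun j => [ffun x => \sum_(i < p) alpha j i * cidem (chi_ i) x] : kG k gT.
pose EB := fun j => [ffun x => \sum_(i < p) beta j i * cidem (chi_ i) x] : kG k gT.
pose A := \sum_(1 <= j < t.+1) mulH chi (zpow k gT n (l j)) (kG_emb n (EA j)).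
pose B := \sum_(1 <= j < r.+1) mulH chi (zpow k gT n (m j)) (kG_emb n (EB j)).
have heq' : forall x, in_ideal chi A x <-> in_ideal chi B x := heq.
have ltA : (l t < n)%N.
  have := @chain t l l_decr (t - 1)%N 1 (leqnn 1).
  rewrite subnKC // => /(_ (leqnn t)) h; move: h l1_lt; clear; lia.
have ltB : (m r < n)%N.
  have := @chain r m m_decr (r - 1)%N 1 (leqnn 1).
  rewrite subnKC // => /(_ (leqnn r)) h; move: h m1_lt; clear; lia.
have step (j0 : 'I_p) :
  [/\ alpha t j0 != 0 -> (m r <= l t)%N, beta r j0 != 0 -> (l t <= m r)%N,
      l t = m r -> beta r j0 = 0 -> alpha t j0 = 0 &
      m r = l t -> alpha t j0 = 0 -> beta r j0 = 0].
  have [W HW] := exists_W k_char0 chi_irr j0.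
  have [lA PA] := zsum_props chi (irr_repr W) EA t_pos l1_lt l_decr.
  have [lB PB] := zsum_props chi (irr_repr W) EB r_pos m1_lt m_decr.
  rewrite (rho_E k_char0 chi_irr HW) in PA.
  rewrite (rho_E k_char0 chi_irr HW) in PB.
  have [d1 d2] := dir chi1 (irr_degree_gt0 W) ltA ltB lA lB PA PB (fun x => (heq' x).1).
  have [d3 d4] := dir chi1 (irr_degree_gt0 W) ltB ltA lB lA PB PA (fun x => (heq' x).2).
  by split.
have [i0 hi0] : exists i, alpha t i != 0.
  have : ~~ [forall i, alpha t i == 0].
    apply: contra alpha_t_nz => /forallP h; apply/eqP; rewrite big1 // => i _; exact/eqP/h.
  by case/forallPn => i hi; exists i.
have [j1 hj1] : exists i, beta r i != 0.
  have : ~~ [forall i, beta r i == 0].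
    apply: contra beta_r_nz => /forallP h; apply/eqP; rewrite big1 // => i _; exact/eqP/h.
  by case/forallPn => i hi; exists i.
have elt : l t = m r.
  have [s1 _ _ _] := step i0; have [_ s2 _ _] := step j1.
  by apply/eqP; rewrite eqn_leq (s1 hi0) (s2 hj1).
split => // i.
have [_ _ s3 s4] := step i.
have ht : (1 <= t <= t)%N by rewrite t_pos leqnn.
have hr : (1 <= r <= r)%N by rewrite r_pos leqnn.
case/orP: (alpha01 t i ht) => /eqP ha; case/orP: (beta01 r i hr) => /eqP hb.
- by rewrite ha hb.
- by move: (s4 (esym elt) ha); rewrite hb => /eqP; rewrite oner_eq0.
- by move: (s3 elt hb); rewrite ha => /eqP; rewrite oner_eq0.
- by rewrite ha hb.
Qed.
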